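(* Let $\nu\in(0,1)$, $r=\min\{\nu,1-\nu\}$, $R=\max\{\nu,1-\nu\}$, and put $D(t):=L(t,1)-L(t^\nu,1)$. If $t>1$, then \begin{align*} &\frac{r}{\nu}\frac{(\sqrt t-1)^2}{\log t}\le D(t)\le \frac{R}{\nu}\frac{(\sqrt t-1)^2}{\log t},\\ &\frac{1-\nu}{2}\frac{(t-1)^2}{\max\{t,1\}\log t}\le D(t)\le \frac{1-\nu}{2}\frac{(t-1)^2}{\min\{t,1\}\log t},\\ &\frac{1-\nu}{2}\min\{t,1\}\log t\le D(t)\le \frac{1-\nu}{2}\max\{t,1\}\log t,\\ &\frac{1-\nu}{\nu}\min\left\{\frac{\nu}{1-\nu},\frac{1-\nu}{\nu}\right\}\big(L(t,1)-L(t^{1-\nu},1)\big)\le D(t)\le \frac{1-\nu}{\nu}\max\left\{\frac{\nu}{1-\nu},\frac{1-\nu}{\nu}\right\}\big(L(t,1)-L(t^{1-\nu},1)\big). \end{align*} If $0<t<1$, all these inequalities hold with the inequality signs reversed.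
   Context: For $x,y>0$, $x\ne y$, the logarithmic mean is $L(x,y):=\dfrac{x-y}{\log x-\log y}$. *)

(* Defs.v *)
From Stdlib Require Import Reals.
Open Scope R_scope.

Definition logmean (x y : R) : R := (x - y) / (ln x - ln y).

Definition Dnu (nu t : R) : R := logmean t 1 - logmean (Rpower t nu) 1.

(* Main.v *)
Require Import Defs.
From Stdlib Require Import Reals Lra Psatz.
From Coquelicot Require Import Coquelicot.
Open Scope R_scope.

Lemma exp_le x y : x <= y -> exp x <= exp y.
Proof. intros [H|H]; [left; apply exp_increasing; auto | subst; lra]. Qed.

Lemma mono_r (h h' : R -> R) : (forall x, is_derive h x (h' x)) ->
  (forall x, 0 < x -> 0 <= h' x) -> forall x, 0 <= x -> h 0 <= h x.
Proof.
  intros Hd Hs x [Hx|Hx]; [|subst; lra].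
  destruct (MVT_cor2 h h' 0 x Hx) as [c [E Hc]].
  { intros c _. apply is_derive_Reals, Hd. }
  assert (0 <= h' c) by (apply Hs; lra). nra.
Qed.

Lemma mono_l (h h' : R -> R) : (forall x, is_derive h x (h' x)) ->
  (forall x, x < 0 -> h' x <= 0) -> forall x, x <= 0 -> h 0 <= h x.
Proof.
  intros Hd Hs x [Hx|Hx]; [|subst; lra].
  destruct (MVT_cor2 h h' x 0 Hx) as [c [E Hc]].
  { intros c _. apply is_derive_Reals, Hd. }
  assert (h' c <= 0) by (apply Hs; lra). nra.
Qed.

Lemma mono_both (h h' : R -> R) : (forall x, is_derive h x (h' x)) ->
  (forall x, 0 < x -> 0 <= h' x) -> (forall x, x < 0 -> h' x <= 0) ->
  forall x, h 0 <= h x.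
Proof.
  intros Hd H1 H2 x. destruct (Rle_lt_dec 0 x).
  - eapply mono_r; eauto.
  - eapply mono_l; eauto; lra.
Qed.

Lemma KF p x : 0 <= p <= 1 -> exp (p * x) <= (1 - p) + p * exp x.
Proof.
  intros Hp.
  pose (h := fun x => (1 - p) + p * exp x - exp (p * x)).
  assert (H := mono_both h (fun x => p * exp x - p * exp (p * x))).
  assert (h 0 <= h x).
  { apply H.
    - intro y. unfold h. auto_derive; [exact I| ring].
    - intros y Hy. assert (exp (p*y) <= exp y) by (apply exp_le; nra). nra.
    - intros y Hy. assert (exp y <= exp (p*y)) by (apply exp_le; nra). nra. }
  unfold h in H0. rewrite Rmult_0_r, exp_0 in H0. lra.
Qed.

Lemma KFconv p x : p <= 0 -> (1 - p) + p * exp x <= exp (p * x).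
Proof.
  intros Hp.
  pose (h := fun x => exp (p * x) - ((1 - p) + p * exp x)).
  assert (H := mono_both h (fun x => p * exp (p * x) - p * exp x)).
  assert (h 0 <= h x).
  { apply H.
    - intro y. unfold h. auto_derive; [exact I| ring].
    - intros y Hy. assert (exp (p*y) <= exp y) by (apply exp_le; nra). nra.
    - intros y Hy. assert (exp y <= exp (p*y)) by (apply exp_le; nra). nra. }
  unfold h in H0. rewrite Rmult_0_r, exp_0 in H0. lra.
Qed.
Lemma exp_le1 x : x <= 0 -> exp x <= 1.
Proof. intros; rewrite <- exp_0; apply exp_le; auto. Qed.
Lemma exp_ge1 x : 0 <= x -> 1 <= exp x.
Proof. intros; rewrite <- exp_0; apply exp_le; auto. Qed.
Lemma cosh2 y : 2 <= exp y + exp (- y).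
Proof.
  assert (exp y * exp (-y) = 1) by (rewrite <- exp_plus; replace (y + -y) with 0 by ring; apply exp_0).
  assert (0 < exp y) by apply exp_pos.
  assert (0 < exp (-y)) by apply exp_pos.
  assert (exp y * (exp y + exp (-y) - 2) = (exp y - 1)^2) by (replace (exp y * (exp y + exp (- y) - 2)) with (exp y * exp y + exp y * exp (-y) - 2 * exp y) by ring; rewrite H; ring).
  assert (0 <= (exp y - 1)^2) by apply pow2_ge_0.
  destruct (Rle_lt_dec 2 (exp y + exp (-y))); auto.
  assert (exp y * (exp y + exp (-y) - 2) < 0). { apply Rmult_pos_neg; lra. } lra.
Qed.

Definition Fn (nu s : R) := exp s - 1 - (exp (nu*s) - 1)/nu.

Lemma esplit nu x : exp x = exp (nu * x) * exp ((1 - nu) * x).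
Proof. rewrite <- exp_plus. f_equal. ring. Qed.
Lemma esplit2 nu x : exp (nu * x) = exp x * exp (- ((1 - nu) * x)).
Proof. rewrite <- exp_plus. f_equal. ring. Qed.

Lemma C3a nu s : 0 < nu < 1 -> 0 < s -> (1-nu)/2 * s^2 <= Fn nu s.
Proof.
  intros Hn Hs.
  pose (h := fun x => Fn nu x - (1-nu)/2 * x^2).
  assert (h 0 <= h s).
  { apply (mono_r h (fun x => exp x - exp (nu*x) - (1-nu)*x)); [| |lra].
    - intro y. unfold h, Fn. auto_derive; [exact I|]. field. lra.
    - intros y Hy. rewrite (esplit nu y).
      assert (1 + (1-nu)*y <= exp ((1-nu)*y)) by apply exp_ineq1_le.
      assert (1 <= exp (nu*y)) by (rewrite <- exp_0; apply exp_le; nra).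
      assert (0 <= (1-nu)*y) by nra. nra. }
  unfold h, Fn in H. rewrite Rmult_0_r, exp_0 in H. unfold Fn. lra.
Qed.

Ltac fin := match goal with H : ?h 0 <= ?h ?s |- _ => unfold h, Fn in *; rewrite ?Rmult_0_r, ?Ropp_0, ?exp_0 in H; lra end.

Lemma C3b nu s : 0 < nu < 1 -> 0 < s -> Fn nu s <= (1-nu)/2 * exp s * s^2.
Proof.
  intros Hn Hs.
  pose (h := fun x => (1-nu)/2 * exp x * x^2 - Fn nu x).
  assert (h 0 <= h s).
  { apply (mono_r h (fun x => (1-nu)*x*exp x + (1-nu)/2*x^2*exp x - exp x + exp (nu*x))); [| |lra].
    - intro y. unfold h, Fn. auto_derive; [exact I|]. field. lra.
    - intros y Hy. rewrite (esplit2 nu y).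
      assert (1 + - ((1-nu)*y) <= exp (-((1-nu)*y))) by apply exp_ineq1_le.
      assert (0 < exp y) by apply exp_pos.
      assert (0 <= y^2 * exp y) by (apply Rmult_le_pos; nra).
      nra. }
  fin.
Qed.

Lemma C3c nu s : 0 < nu < 1 -> s < 0 -> (1-nu)/2 * exp s * s^2 <= Fn nu s.
Proof.
  intros Hn Hs.
  pose (h := fun x => Fn nu x - (1-nu)/2 * exp x * x^2).
  assert (h 0 <= h s).
  { apply (mono_l h (fun x => exp x - exp (nu*x) - (1-nu)*x*exp x - (1-nu)/2*x^2*exp x)); [| |lra].
    - intro y. unfold h, Fn. auto_derive; [exact I|]. field. lra.
    - intros y Hy. rewrite (esplit2 nu y).
      assert (1 + - ((1-nu)*y) <= exp (-((1-nu)*y))) by apply exp_ineq1_le.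
      assert (0 < exp y) by apply exp_pos.
      assert (0 <= y^2 * exp y) by (apply Rmult_le_pos; nra).
      nra. }
  fin.
Qed.

Lemma C3d nu s : 0 < nu < 1 -> s < 0 -> Fn nu s <= (1-nu)/2 * s^2.
Proof.
  intros Hn Hs.
  pose (h := fun x => (1-nu)/2 * x^2 - Fn nu x).
  assert (h 0 <= h s).
  { apply (mono_l h (fun x => (1-nu)*x - exp x + exp (nu*x))); [| |lra].
    - intro y. unfold h, Fn. auto_derive; [exact I|]. field. lra.
    - intros y Hy. rewrite (esplit nu y).
      assert (1 + (1-nu)*y <= exp ((1-nu)*y)) by apply exp_ineq1_le.
      assert (exp ((1-nu)*y) <= 1) by (apply exp_le1; nra).
      assert (0 < exp (nu*y)) by apply exp_pos.
      assert (exp (nu*y) <= 1) by (apply exp_le1; nra).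
      nra. }
  fin.
Qed.

Lemma C2a nu s : 0 < nu < 1 -> 0 < s -> (1-nu)/2 * (exp s - 1)^2 / exp s <= Fn nu s.
Proof.
  intros Hn Hs.
  assert (E : (1-nu)/2 * (exp s - 1)^2 / exp s = (1-nu)/2 * (exp s - 2 + exp (-s))).
  { rewrite exp_Ropp. field. apply Rgt_not_eq, exp_pos. }
  rewrite E.
  pose (h := fun x => Fn nu x - (1-nu)/2 * (exp x - 2 + exp (-x))).
  assert (h 0 <= h s).
  { apply (mono_r h (fun x => exp x - exp (nu*x) - (1-nu)/2*(exp x - exp (-x)))); [| |lra].
    - intro y. unfold h, Fn. auto_derive; [exact I|]. field. lra.
    - intros y Hy.
      assert (exp (nu*y) <= (1-nu) + nu * exp y) by (apply KF; lra).
      assert (2 <= exp y + exp (-y)) by apply cosh2.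
      assert (0 < exp y) by apply exp_pos.
      assert (0 < exp (-y)) by apply exp_pos.
      nra. }
  fin.
Qed.

Lemma C2b nu s : 0 < nu < 1 -> 0 < s -> Fn nu s <= (1-nu)/2 * (exp s - 1)^2.
Proof.
  intros Hn Hs.
  pose (h := fun x => (1-nu)/2 * (exp x - 1)^2 - Fn nu x).
  assert (h 0 <= h s).
  { apply (mono_r h (fun x => (1-nu)*(exp x - 1)*exp x - exp x + exp (nu*x))); [| |lra].
    - intro y. unfold h, Fn. auto_derive; [exact I|]. field. lra.
    - intros y Hy. rewrite (esplit2 nu y).
      assert (1 + - ((1-nu)*y) <= exp (-((1-nu)*y))) by apply exp_ineq1_le.
      assert (1 + y <= exp y) by apply exp_ineq1_le.
      assert (0 < exp y) by apply exp_pos.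
      assert (0 <= (1-nu) * exp y * (exp y - 1 - y)) by (apply Rmult_le_pos; nra).
      nra. }
  fin.
Qed.

Lemma C2c nu s : 0 < nu < 1 -> s < 0 -> (1-nu)/2 * (exp s - 1)^2 <= Fn nu s.
Proof.
  intros Hn Hs.
  pose (h := fun x => Fn nu x - (1-nu)/2 * (exp x - 1)^2).
  assert (h 0 <= h s).
  { apply (mono_l h (fun x => exp x - exp (nu*x) - (1-nu)*(exp x - 1)*exp x)); [| |lra].
    - intro y. unfold h, Fn. auto_derive; [exact I|]. field. lra.
    - intros y Hy. rewrite (esplit2 nu y).
      assert (1 + - ((1-nu)*y) <= exp (-((1-nu)*y))) by apply exp_ineq1_le.
      assert (1 + y <= exp y) by apply exp_ineq1_le.
      assert (0 < exp y) by apply exp_pos.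
      assert (0 <= (1-nu) * exp y * (exp y - 1 - y)) by (apply Rmult_le_pos; nra).
      nra. }
  fin.
Qed.

Lemma C2d nu s : 0 < nu < 1 -> s < 0 -> Fn nu s <= (1-nu)/2 * (exp s - 1)^2 / exp s.
Proof.
  intros Hn Hs.
  assert (E : (1-nu)/2 * (exp s - 1)^2 / exp s = (1-nu)/2 * (exp s - 2 + exp (-s))).
  { rewrite exp_Ropp. field. apply Rgt_not_eq, exp_pos. }
  rewrite E.
  pose (h := fun x => (1-nu)/2 * (exp x - 2 + exp (-x)) - Fn nu x).
  assert (h 0 <= h s).
  { apply (mono_l h (fun x => (1-nu)/2*(exp x - exp (-x)) - exp x + exp (nu*x))); [| |lra].
    - intro y. unfold h, Fn. auto_derive; [exact I|]. field. lra.
    - intros y Hy.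
      assert (exp (nu*y) <= (1-nu) + nu * exp y) by (apply KF; lra).
      assert (2 <= exp y + exp (-y)) by apply cosh2.
      assert (0 < exp y) by apply exp_pos.
      assert (0 < exp (-y)) by apply exp_pos.
      nra. }
  fin.
Qed.


Lemma ehalf x : exp x = exp (x/2) * exp (x/2).
Proof. rewrite <- exp_plus. f_equal. field. Qed.
Lemma emul a b c : a + b = c -> exp a * exp b = exp c.
Proof. intros <-. symmetry. apply exp_plus. Qed.

Lemma C1a nu s : 0 < nu < 1 -> nu <= 1/2 -> (exp (s/2) - 1)^2 <= Fn nu s.
Proof.
  intros Hn Hh.
  pose (h := fun x => Fn nu x - (exp (x/2) - 1)^2).
  assert (h 0 <= h s).
  { apply (mono_both h (fun x => exp x - exp (nu*x) - (exp (x/2) - 1) * exp (x/2))).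
    - intro y. unfold h, Fn. auto_derive; [exact I|]. unfold Rdiv. field. lra.
    - intros y Hy. rewrite (ehalf y).
      assert (exp (nu*y) <= exp (y/2)) by (apply exp_le; nra). nra.
    - intros y Hy. rewrite (ehalf y).
      assert (exp (y/2) <= exp (nu*y)) by (apply exp_le; nra). nra. }
  unfold h, Fn in *. replace (0/2) with 0 in H by field.
  rewrite ?Rmult_0_r, ?exp_0 in H. lra.
Qed.

Lemma C1b nu s : 0 < nu < 1 -> 1/2 <= nu -> Fn nu s <= (exp (s/2) - 1)^2.
Proof.
  intros Hn Hh.
  pose (h := fun x => (exp (x/2) - 1)^2 - Fn nu x).
  assert (h 0 <= h s).
  { apply (mono_both h (fun x => (exp (x/2) - 1) * exp (x/2) - exp x + exp (nu*x))).
    - intro y. unfold h, Fn. auto_derive; [exact I|]. unfold Rdiv. field. lra.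
    - intros y Hy. rewrite (ehalf y).
      assert (exp (y/2) <= exp (nu*y)) by (apply exp_le; nra). nra.
    - intros y Hy. rewrite (ehalf y).
      assert (exp (nu*y) <= exp (y/2)) by (apply exp_le; nra). nra. }
  unfold h, Fn in *. replace (0/2) with 0 in H by field.
  rewrite ?Rmult_0_r, ?exp_0 in H. lra.
Qed.

Lemma C1id nu s : 0 < nu < 1 ->
  nu * Fn nu s - (1-nu) * (exp (s/2) - 1)^2 =
  - exp (s/2) * (exp ((2*nu-1)*(s/2)) - ((1 - (2*nu-1)) + (2*nu-1) * exp (s/2))).
Proof.
  intros Hn. unfold Fn.
  assert (E1 : exp (nu * s) = exp (s/2) * exp ((2*nu-1)*(s/2))) by (symmetry; apply emul; field).
  rewrite E1, (ehalf s). field. lra.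
Qed.

Lemma C1c nu s : 0 < nu < 1 -> nu <= 1/2 -> nu * Fn nu s <= (1-nu) * (exp (s/2) - 1)^2.
Proof.
  intros Hn Hh. assert (H := C1id nu s Hn).
  assert (H2 := KFconv (2*nu-1) (s/2) ltac:(lra)).
  assert (0 < exp (s/2)) by apply exp_pos. nra.
Qed.

Lemma C1d nu s : 0 < nu < 1 -> 1/2 <= nu -> (1-nu) * (exp (s/2) - 1)^2 <= nu * Fn nu s.
Proof.
  intros Hn Hh. assert (H := C1id nu s Hn).
  assert (H2 := KF (2*nu-1) (s/2) ltac:(lra)).
  assert (0 < exp (s/2)) by apply exp_pos. nra.
Qed.

Lemma C4a nu s : 0 < nu < 1 -> nu <= 1/2 -> Fn (1-nu) s <= Fn nu s.
Proof.
  intros Hn Hh.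
  pose (h := fun x => Fn nu x - Fn (1-nu) x).
  assert (h 0 <= h s).
  { apply (mono_both h (fun x => exp ((1-nu)*x) - exp (nu*x))).
    - intro y. unfold h, Fn. auto_derive; [exact I|]. field. lra.
    - intros y Hy. assert (exp (nu*y) <= exp ((1-nu)*y)) by (apply exp_le; nra). nra.
    - intros y Hy. assert (exp ((1-nu)*y) <= exp (nu*y)) by (apply exp_le; nra). nra. }
  unfold h, Fn in *. rewrite ?Rmult_0_r, ?exp_0 in H. lra.
Qed.

Lemma C4b nu s : 0 < nu < 1 -> 1/2 <= nu -> Fn nu s <= Fn (1-nu) s.
Proof.
  intros Hn Hh.
  pose (h := fun x => Fn (1-nu) x - Fn nu x).
  assert (h 0 <= h s).
  { apply (mono_both h (fun x => exp (nu*x) - exp ((1-nu)*x))).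
    - intro y. unfold h, Fn. auto_derive; [exact I|]. field. lra.
    - intros y Hy. assert (exp ((1-nu)*y) <= exp (nu*y)) by (apply exp_le; nra). nra.
    - intros y Hy. assert (exp (nu*y) <= exp ((1-nu)*y)) by (apply exp_le; nra). nra. }
  unfold h, Fn in *. rewrite ?Rmult_0_r, ?exp_0 in H. lra.
Qed.

Definition Hf nu x := (2*nu-1)*exp (x/2) - nu * exp ((nu-1/2)*x) + (1-nu) * exp ((1/2-nu)*x).

Lemma Kid nu s : 0 < nu < 1 ->
  nu^2 * Fn nu s - (1-nu)^2 * Fn (1-nu) s = exp (s/2) * Hf nu s.
Proof.
  intros Hn. unfold Fn, Hf.
  assert (E1 : exp (nu * s) = exp (s/2) * exp ((nu-1/2)*s)) by (symmetry; apply emul; field).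
  assert (E2 : exp ((1-nu) * s) = exp (s/2) * exp ((1/2-nu)*s)) by (symmetry; apply emul; field).
  rewrite E1, E2, (ehalf s). field. lra.
Qed.

Lemma Mpos nu x : 0 < nu < 1 -> 0 < x ->
  0 <= exp (x/2) - nu * exp ((nu-1/2)*x) - (1-nu) * exp ((1/2-nu)*x).
Proof.
  intros Hn Hx.
  assert (E1 : exp ((nu-1/2)*x) = exp (x/2) * exp (-((1-nu)*x))) by (symmetry; apply emul; field).
  assert (E2 : exp ((1/2-nu)*x) = exp (x/2) * exp (-(nu*x))) by (symmetry; apply emul; field).
  rewrite E1, E2.
  assert (exp (-((1-nu)*x)) <= 1) by (apply exp_le1; nra).
  assert (exp (-(nu*x)) <= 1) by (apply exp_le1; nra).
  assert (0 < exp (x/2)) by apply exp_pos.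
  assert (0 <= exp (x/2) * (1 - exp (-((1-nu)*x)))) by (apply Rmult_le_pos; lra).
  assert (0 <= exp (x/2) * (1 - exp (-(nu*x)))) by (apply Rmult_le_pos; lra). nra.
Qed.

Lemma Mneg nu x : 0 < nu < 1 -> x < 0 ->
  exp (x/2) - nu * exp ((nu-1/2)*x) - (1-nu) * exp ((1/2-nu)*x) <= 0.
Proof.
  intros Hn Hx.
  assert (E1 : exp ((nu-1/2)*x) = exp (x/2) * exp (-((1-nu)*x))) by (symmetry; apply emul; field).
  assert (E2 : exp ((1/2-nu)*x) = exp (x/2) * exp (-(nu*x))) by (symmetry; apply emul; field).
  rewrite E1, E2.
  assert (1 <= exp (-((1-nu)*x))) by (apply exp_ge1; nra).
  assert (1 <= exp (-(nu*x))) by (apply exp_ge1; nra).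
  assert (0 < exp (x/2)) by apply exp_pos.
  assert (0 <= exp (x/2) * (exp (-((1-nu)*x)) - 1)) by (apply Rmult_le_pos; lra).
  assert (0 <= exp (x/2) * (exp (-(nu*x)) - 1)) by (apply Rmult_le_pos; lra). nra.
Qed.

Lemma Hd nu y : is_derive (Hf nu) y
  ((nu - 1/2) * (exp (y/2) - nu * exp ((nu-1/2)*y) - (1-nu) * exp ((1/2-nu)*y))).
Proof. unfold Hf. auto_derive; [exact I|]. unfold Rdiv. field. Qed.

Lemma Hf0 nu : Hf nu 0 = 0.
Proof. unfold Hf. replace (0/2) with 0 by field. rewrite !Rmult_0_r, exp_0. ring. Qed.

Lemma C4c nu s : 0 < nu < 1 -> nu <= 1/2 -> nu^2 * Fn nu s <= (1-nu)^2 * Fn (1-nu) s.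
Proof.
  intros Hn Hh. assert (K := Kid nu s Hn).
  pose (h := fun x => - Hf nu x).
  assert (h 0 <= h s).
  { apply (mono_both h (fun x => - ((nu - 1/2) * (exp (x/2) - nu * exp ((nu-1/2)*x) - (1-nu) * exp ((1/2-nu)*x))))).
    - intro y. unfold h. apply (is_derive_opp (Hf nu)). apply Hd.
    - intros y Hy. assert (H := Mpos nu y Hn Hy). nra.
    - intros y Hy. assert (H := Mneg nu y Hn Hy). nra. }
  unfold h in H. rewrite Hf0 in H.
  assert (0 < exp (s/2)) by apply exp_pos. nra.
Qed.

Lemma C4d nu s : 0 < nu < 1 -> 1/2 <= nu -> (1-nu)^2 * Fn (1-nu) s <= nu^2 * Fn nu s.
Proof.
  intros Hn Hh. assert (K := Kid nu s Hn).
  assert (H : Hf nu 0 <= Hf nu s).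
  { apply (mono_both (Hf nu) (fun x => ((nu - 1/2) * (exp (x/2) - nu * exp ((nu-1/2)*x) - (1-nu) * exp ((1/2-nu)*x))))).
    - intro y. apply Hd.
    - intros y Hy. assert (H := Mpos nu y Hn Hy). nra.
    - intros y Hy. assert (H := Mneg nu y Hn Hy). nra. }
  rewrite Hf0 in H.
  assert (0 < exp (s/2)) by apply exp_pos. nra.
Qed.
Lemma L_pos c X Y s : 0 < s -> c*X <= Y -> c*(X/s) <= Y/s.
Proof.
  intros Hs H. replace (c*(X/s)) with ((c*X)/s) by (field; lra).
  apply Rmult_le_compat_r; [left; apply Rinv_0_lt_compat; lra | lra].
Qed.
Lemma L_pos' c X Y s : 0 < s -> Y <= c*X -> Y/s <= c*(X/s).
Proof.
  intros Hs H. replace (c*(X/s)) with ((c*X)/s) by (field; lra).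
  apply Rmult_le_compat_r; [left; apply Rinv_0_lt_compat; lra | lra].
Qed.
Lemma L_neg c X Y s : s < 0 -> c*X <= Y -> c*(X/s) >= Y/s.
Proof.
  intros Hs H. replace (c*(X/s)) with ((c*X)*/s) by (field; lra).
  unfold Rdiv. assert (/s < 0) by (apply Rinv_lt_0_compat; lra). nra.
Qed.
Lemma L_neg' c X Y s : s < 0 -> Y <= c*X -> Y/s >= c*(X/s).
Proof.
  intros Hs H. replace (c*(X/s)) with ((c*X)*/s) by (field; lra).
  unfold Rdiv. assert (/s < 0) by (apply Rinv_lt_0_compat; lra). nra.
Qed.

Lemma scale k F m Fa c : 0 < k -> k*F <= m*Fa -> c*k = m -> F <= c*Fa.
Proof. intros Hk H E. apply (Rmult_le_reg_l k); [lra|]. rewrite <- E in H. nra. Qed.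
Lemma scale' k F m Fa c : 0 < k -> m*Fa <= k*F -> c*k = m -> c*Fa <= F.
Proof. intros Hk H E. apply (Rmult_le_reg_l k); [lra|]. rewrite <- E in H. nra. Qed.

Lemma ratio_le nu : 0 < nu < 1 -> nu <= 1/2 -> nu/(1-nu) <= (1-nu)/nu.
Proof.
  intros Hn Hh. apply Rle_trans with 1.
  - apply (Rmult_le_reg_r (1-nu)); [lra|]. unfold Rdiv. rewrite Rmult_assoc, Rinv_l; lra.
  - apply (Rmult_le_reg_r nu); [lra|]. unfold Rdiv. rewrite Rmult_assoc, Rinv_l; lra.
Qed.

Lemma sqrt_exp s : sqrt (exp s) = exp (s/2).
Proof. rewrite (ehalf s). apply sqrt_square. left; apply exp_pos. Qed.

Lemma DnuE nu s : 0 < nu < 1 -> s <> 0 -> Dnu nu (exp s) = Fn nu s / s.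
Proof.
  intros Hn Hs. unfold Dnu, logmean, Rpower, Fn. rewrite !ln_exp, ln_1. field.
  split; lra.
Qed.

Lemma LE nu s : 0 < nu < 1 -> s <> 0 ->
  logmean (exp s) 1 - logmean (Rpower (exp s) (1 - nu)) 1 = Fn (1-nu) s / s.
Proof.
  intros Hn Hs. unfold logmean, Rpower, Fn. rewrite !ln_exp, ln_1. field.
  split; lra.
Qed.

Theorem proposition2p6 (nu t : R) :
  0 < nu < 1 ->
  (1 < t ->
     (Rmin nu (1 - nu) / nu * ((sqrt t - 1) ^ 2 / ln t) <= Dnu nu t /\
      Dnu nu t <= Rmax nu (1 - nu) / nu * ((sqrt t - 1) ^ 2 / ln t)) /\
     ((1 - nu) / 2 * ((t - 1) ^ 2 / (Rmax t 1 * ln t)) <= Dnu nu t /\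
      Dnu nu t <= (1 - nu) / 2 * ((t - 1) ^ 2 / (Rmin t 1 * ln t))) /\
     ((1 - nu) / 2 * Rmin t 1 * ln t <= Dnu nu t /\
      Dnu nu t <= (1 - nu) / 2 * Rmax t 1 * ln t) /\
     ((1 - nu) / nu * Rmin (nu / (1 - nu)) ((1 - nu) / nu)
        * (logmean t 1 - logmean (Rpower t (1 - nu)) 1) <= Dnu nu t /\
      Dnu nu t <= (1 - nu) / nu * Rmax (nu / (1 - nu)) ((1 - nu) / nu)
        * (logmean t 1 - logmean (Rpower t (1 - nu)) 1))) /\
  (0 < t < 1 ->
     (Rmin nu (1 - nu) / nu * ((sqrt t - 1) ^ 2 / ln t) >= Dnu nu t /\
      Dnu nu t >= Rmax nu (1 - nu) / nu * ((sqrt t - 1) ^ 2 / ln t)) /\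
     ((1 - nu) / 2 * ((t - 1) ^ 2 / (Rmax t 1 * ln t)) >= Dnu nu t /\
      Dnu nu t >= (1 - nu) / 2 * ((t - 1) ^ 2 / (Rmin t 1 * ln t))) /\
     ((1 - nu) / 2 * Rmin t 1 * ln t >= Dnu nu t /\
      Dnu nu t >= (1 - nu) / 2 * Rmax t 1 * ln t) /\
     ((1 - nu) / nu * Rmin (nu / (1 - nu)) ((1 - nu) / nu)
        * (logmean t 1 - logmean (Rpower t (1 - nu)) 1) >= Dnu nu t /\
      Dnu nu t >= (1 - nu) / nu * Rmax (nu / (1 - nu)) ((1 - nu) / nu)
        * (logmean t 1 - logmean (Rpower t (1 - nu)) 1))).
Proof.
  intros Hn. split; intros Ht.
  - assert (Ht0 : 0 < t) by lra.
    assert (hs : 0 < ln t) by (rewrite <- ln_1; apply ln_increasing; lra).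
    rewrite <- (exp_ln t Ht0). rewrite ln_exp.
    revert hs. generalize (ln t). clear t Ht Ht0. intros s hs.
    assert (hs0 : s <> 0) by lra.
    assert (e1 : 1 < exp s) by (rewrite <- exp_0; apply exp_increasing; lra).
    rewrite sqrt_exp, (DnuE nu s Hn hs0), (LE nu s Hn hs0).
    rewrite (Rmax_left (exp s) 1), (Rmin_right (exp s) 1) by lra.
    rewrite Rmult_1_l.
    replace ((exp s - 1)^2 / (exp s * s)) with (((exp s - 1)^2 / exp s) / s)
      by (field; split; lra).
    replace ((1-nu)/2 * 1 * s) with ((1-nu)/2 * (s^2/s)) by (field; lra).
    replace ((1-nu)/2 * exp s * s) with (((1-nu)/2 * exp s) * (s^2/s)) by (field; lra).
    destruct (Rle_lt_dec nu (1/2)) as [Hh|Hh].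
    + rewrite (Rmin_left nu), (Rmax_right nu) by lra.
      rewrite (Rmin_left (nu/(1-nu))), (Rmax_right (nu/(1-nu))) by (apply ratio_le; lra).
      repeat split.
      * apply L_pos; auto. replace (nu/nu) with 1 by (field; lra). rewrite Rmult_1_l. apply C1a; auto.
      * apply L_pos'; auto. apply (scale nu _ (1-nu) _); [lra| apply C1c; auto | field; lra].
      * apply L_pos; auto. replace ((1-nu)/2 * ((exp s - 1)^2/exp s)) with ((1-nu)/2 * (exp s - 1)^2/exp s) by (field; lra). apply C2a; auto.
      * apply L_pos'; auto. apply C2b; auto.
      * apply L_pos; auto. apply C3a; auto.
      * apply L_pos'; auto. apply C3b; auto.
      * apply L_pos; auto. replace ((1-nu)/nu*(nu/(1-nu))) with 1 by (field; lra). rewrite Rmult_1_l. apply C4a; auto.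
      * apply L_pos'; auto. apply (scale (nu^2) _ ((1-nu)^2) _); [nra| apply C4c; auto | field; lra].
    + rewrite (Rmin_right nu), (Rmax_left nu) by lra.
      assert (Hr := ratio_le (1-nu) ltac:(lra) ltac:(lra)).
      replace (1-(1-nu)) with nu in Hr by ring.
      rewrite (Rmin_right (nu/(1-nu))), (Rmax_left (nu/(1-nu))) by lra.
      repeat split.
      * apply L_pos; auto. apply (scale' nu _ (1-nu) _); [lra| apply C1d; auto; lra | field; lra].
      * apply L_pos'; auto. replace (nu/nu) with 1 by (field; lra). rewrite Rmult_1_l. apply C1b; auto; lra.
      * apply L_pos; auto. replace ((1-nu)/2 * ((exp s - 1)^2/exp s)) with ((1-nu)/2 * (exp s - 1)^2/exp s) by (field; lra). apply C2a; auto.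
      * apply L_pos'; auto. apply C2b; auto.
      * apply L_pos; auto. apply C3a; auto.
      * apply L_pos'; auto. apply C3b; auto.
      * apply L_pos; auto. apply (scale' (nu^2) _ ((1-nu)^2) _); [nra| apply C4d; auto; lra | field; lra].
      * apply L_pos'; auto. replace ((1-nu)/nu*(nu/(1-nu))) with 1 by (field; lra). rewrite Rmult_1_l. apply C4b; auto; lra.
  - assert (Ht0 : 0 < t) by lra.
    assert (hs : ln t < 0) by (rewrite <- ln_1; apply ln_increasing; lra).
    rewrite <- (exp_ln t Ht0). rewrite ln_exp.
    revert hs. generalize (ln t). clear t Ht Ht0. intros s hs.
    assert (hs0 : s <> 0) by lra.
    assert (e1 : exp s < 1) by (rewrite <- exp_0; apply exp_increasing; lra).
    assert (e0 : 0 < exp s) by apply exp_pos.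
    rewrite sqrt_exp, (DnuE nu s Hn hs0), (LE nu s Hn hs0).
    rewrite (Rmax_right (exp s) 1), (Rmin_left (exp s) 1) by lra.
    rewrite Rmult_1_l.
    replace ((exp s - 1)^2 / (exp s * s)) with (((exp s - 1)^2 / exp s) / s)
      by (field; split; lra).
    replace ((1-nu)/2 * 1 * s) with ((1-nu)/2 * (s^2/s)) by (field; lra).
    replace ((1-nu)/2 * exp s * s) with (((1-nu)/2 * exp s) * (s^2/s)) by (field; lra).
    destruct (Rle_lt_dec nu (1/2)) as [Hh|Hh].
    + rewrite (Rmin_left nu), (Rmax_right nu) by lra.
      rewrite (Rmin_left (nu/(1-nu))), (Rmax_right (nu/(1-nu))) by (apply ratio_le; lra).
      repeat split.
      * apply L_neg; auto. replace (nu/nu) with 1 by (field; lra). rewrite Rmult_1_l. apply C1a; auto.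
      * apply L_neg'; auto. apply (scale nu _ (1-nu) _); [lra| apply C1c; auto | field; lra].
      * apply L_neg; auto. apply C2c; auto.
      * apply L_neg'; auto. replace ((1-nu)/2 * ((exp s - 1)^2/exp s)) with ((1-nu)/2 * (exp s - 1)^2/exp s) by (field; lra). apply C2d; auto.
      * apply L_neg; auto. apply C3c; auto.
      * apply L_neg'; auto. apply C3d; auto.
      * apply L_neg; auto. replace ((1-nu)/nu*(nu/(1-nu))) with 1 by (field; lra). rewrite Rmult_1_l. apply C4a; auto.
      * apply L_neg'; auto. apply (scale (nu^2) _ ((1-nu)^2) _); [nra| apply C4c; auto | field; lra].
    + rewrite (Rmin_right nu), (Rmax_left nu) by lra.
      assert (Hr := ratio_le (1-nu) ltac:(lra) ltac:(lra)).
      replace (1-(1-nu)) with nu in Hr by ring.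
      rewrite (Rmin_right (nu/(1-nu))), (Rmax_left (nu/(1-nu))) by lra.
      repeat split.
      * apply L_neg; auto. apply (scale' nu _ (1-nu) _); [lra| apply C1d; auto; lra | field; lra].
      * apply L_neg'; auto. replace (nu/nu) with 1 by (field; lra). rewrite Rmult_1_l. apply C1b; auto; lra.
      * apply L_neg; auto. apply C2c; auto.
      * apply L_neg'; auto. replace ((1-nu)/2 * ((exp s - 1)^2/exp s)) with ((1-nu)/2 * (exp s - 1)^2/exp s) by (field; lra). apply C2d; auto.
      * apply L_neg; auto. apply C3c; auto.
      * apply L_neg'; auto. apply C3d; auto.
      * apply L_neg; auto. apply (scale' (nu^2) _ ((1-nu)^2) _); [nra| apply C4d; auto; lra | field; lra].
      * apply L_neg'; auto. replace ((1-nu)/nu*(nu/(1-nu))) with 1 by (field; lra). rewrite Rmult_1_l. apply C4b; auto; lra.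
Qed.
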